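(* The equation $x+y+z=1$ with $x,y,z\in\mathcal{B}_{2,1}$ and $x\le y\le z$ has exactly two solutions: $$x=2-\sqrt3=[3,\overline{1,2}],\quad y=z=\frac{\sqrt3-1}{2}=[\overline{2,1}],$$ and $$x=y=\frac{2-\sqrt2}{2}=[3,\overline{2}],\quad z=\sqrt2-1=[\overline{2}].$$
   Context: For irrational $x\in(0,1)$, $x=[a_1(x),a_2(x),\dots]$ denotes its simple continued fraction expansion; an overline denotes a periodically repeated block. For a positive integer $B$ and $j\ge0$, $\mathcal{B}_{B,j}$ is the set of irrational $x\in(0,1)$ with $a_k(x)\le B+1$ for all $k\le j$ and $a_k(x)\le B$ for all $k>j$. Thus $\mathcal{B}_{2,1}$ consists of the irrationals $x\in(0,1)$ with $a_1(x)\le3$ and $a_k(x)\le2$ for all $k\ge2$. *)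

(* Defs.v *)
From Stdlib Require Import Reals ZArith.
Open Scope R_scope.

Definition irrational (x : R) : Prop :=
  forall p q : Z, q <> 0%Z -> x <> IZR p / IZR q.

Definition floorR (r : R) : Z := Int_part r.

Definition gauss (x : R) : R := / x - IZR (floorR (/ x)).

(* k-th partial quotient a_k(x), k >= 1:  a_k(x) = floor(1 / T^(k-1)(x)). *)
Definition cf_a (k : nat) (x : R) : Z :=
  floorR (/ (Nat.iter (Nat.pred k) gauss x)).

Definition inB (B : Z) (j : nat) (x : R) : Prop :=
  0 < x < 1 /\ irrational x /\
  forall k : nat, (1 <= k)%nat ->
    ((k <= j)%nat -> (cf_a k x <= B + 1)%Z) /\
    ((j < k)%nat -> (cf_a k x <= B)%Z).

(* Main.v *)
Require Import Defs.
From Stdlib Require Import Reals ZArith Lra Lia Psatz.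
Open Scope R_scope.

Lemma floor_spec r z : IZR z <= r < IZR z + 1 -> floorR r = z.
Proof.
  intros [H1 H2]. unfold floorR, Int_part.
  assert (up r = (z+1)%Z). { symmetry. apply tech_up; rewrite plus_IZR; lra. }
  rewrite H. lia.
Qed.

Lemma floor_bnd r : IZR (floorR r) <= r < IZR (floorR r) + 1.
Proof. unfold floorR. destruct (base_Int_part r). lra. Qed.

Lemma inv_of x y : x * y = 1 -> / x = y.
Proof.
  intro H. assert (x <> 0) by (intro; subst; lra).
  rewrite <- (Rmult_1_r (/x)), <- H, <- Rmult_assoc, Rinv_l; lra.
Qed.

Lemma cf_shift k v : cf_a (S k) (gauss v) = cf_a (S (S k)) v.
Proof. unfold cf_a. simpl Nat.pred. rewrite Nat.iter_succ_r. reflexivity. Qed.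

Lemma cf_1 v : cf_a 1 v = floorR (/ v).
Proof. reflexivity. Qed.

Lemma irr_gauss v : 0 < v -> irrational v -> irrational (gauss v) /\ gauss v <> 0.
Proof.
  intros Hv Hi. unfold gauss. set (a := floorR (/v)). split.
  - intros p q Hq E.
    assert (Hne : (a*q+p)%Z <> 0%Z).
    { intro H0. assert (IZR (a*q+p) = 0) by (rewrite H0; reflexivity).
      rewrite plus_IZR, mult_IZR in H.
      assert (/v = IZR a + IZR p / IZR q) by lra.
      assert (IZR q <> 0) by (apply not_0_IZR; auto).
      assert (/ v = 0).
      { rewrite H1. field_simplify; auto. replace (IZR a * IZR q + IZR p) with 0 by lra. field; auto. }
      assert (0 < / v) by (apply Rinv_0_lt_compat; auto). lra. }
    apply (Hi q (a*q+p)%Z Hne).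
    assert (IZR q <> 0) by (apply not_0_IZR; auto).
    assert (IZR (a*q+p) <> 0) by (apply not_0_IZR; auto).
    rewrite plus_IZR, mult_IZR in *.
    assert (/v = (IZR a * IZR q + IZR p)/ IZR q). { replace (/v) with (IZR a + IZR p / IZR q) by lra. field; auto. }
    rewrite <- (Rinv_inv v), H1. field. split; auto.
  - intro E. apply (Hi 1%Z a).
    + intro Ha. unfold a in Ha. assert (/v = IZR a) by lra. 
      assert (0 < /v) by (apply Rinv_0_lt_compat; auto). unfold a in H. rewrite Ha in H. simpl in H. lra.
    + assert (/v = IZR a) by lra. rewrite <- (Rinv_inv v), H. simpl. field.
      intro H0. assert (0 < /v) by (apply Rinv_0_lt_compat; auto). lra.
Qed.

Lemma inv_gt1 v : 0 < v < 1 -> 1 < / v.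
Proof. intros [H1 H2]. assert (v * /v = 1) by (field; lra).
  assert (0 < /v) by (apply Rinv_0_lt_compat; auto). nra. Qed.

Lemma decomp v : 0 < v < 1 -> irrational v ->
  (1 <= floorR (/v))%Z /\ 0 < gauss v < 1 /\ irrational (gauss v) /\
  v = 1 / (IZR (floorR (/v)) + gauss v).
Proof.
  intros Hv Hi. destruct (irr_gauss v) as [Hg Hg0]; try lra; auto.
  pose proof (inv_gt1 v Hv). pose proof (floor_bnd (/v)).
  assert (IZR (floorR (/v)) > 0) by lra.
  apply lt_0_IZR in H1.
  repeat split; try lia; auto.
  - unfold gauss. destruct (Rle_lt_or_eq_dec 0 (/ v - IZR (floorR (/ v)))); [lra|lra|].
    exfalso; apply Hg0; unfold gauss; lra.
  - unfold gauss. lra.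
  - unfold gauss. replace (IZR (floorR (/ v)) + (/ v - IZR (floorR (/ v)))) with (/v) by ring.
    field_simplify; auto; lra.
Qed.

Definition F2 (v : R) : Prop :=
  0 < v < 1 /\ irrational v /\ forall k : nat, (1 <= k)%nat -> (cf_a k v <= 2)%Z.

Lemma F2_dec v : F2 v -> exists a w, (a = 1 \/ a = 2) /\ F2 w /\ v = 1 / (a + w).
Proof.
  intros [Hv [Hi Hk]]. destruct (decomp v Hv Hi) as [H1 [H2 [H3 H4]]].
  exists (IZR (floorR (/v))), (gauss v). split; [|split; [|auto]].
  - pose proof (Hk 1%nat (le_n 1)). rewrite cf_1 in H.
    assert (floorR (/v) = 1%Z \/ floorR (/v) = 2%Z) by lia.
    destruct H0 as [-> | ->]; auto.
  - split; [auto|split; [auto|]]. intros k Hk1.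
    destruct k; [lia|]. rewrite cf_shift. apply Hk. lia.
Qed.

Lemma B_dec v : inB 2 1 v -> exists a w, (a = 1 \/ a = 2 \/ a = 3) /\ F2 w /\ v = 1 / (a + w).
Proof.
  intros [Hv [Hi Hk]]. destruct (decomp v Hv Hi) as [H1 [H2 [H3 H4]]].
  exists (IZR (floorR (/v))), (gauss v). split; [|split; [|auto]].
  - pose proof (proj1 (Hk 1%nat (le_n 1)) (le_n 1)). rewrite cf_1 in H.
    assert (floorR (/v) = 1%Z \/ floorR (/v) = 2%Z \/ floorR (/v) = 3%Z) by lia.
    destruct H0 as [-> | [-> | ->]]; auto.
  - split; [auto|split; [auto|]]. intros k Hk1.
    destruct k; [lia|]. rewrite cf_shift. apply (Hk (S (S k))); lia.
Qed.

Lemma inv_lt d c : 0 < d -> d < c -> 1/c < 1/d.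
Proof. intros. unfold Rdiv. rewrite !Rmult_1_l. apply Rinv_lt_contravar; nra. Qed.

Lemma F2_gt v : F2 v -> 1/3 < v.
Proof.
  intro H. destruct (F2_dec v H) as [a [w [Ha [[Hw _] ->]]]].
  apply inv_lt; destruct Ha; subst; lra.
Qed.

Lemma s3_facts : sqrt 3 * sqrt 3 = 3 /\ 1.73204 < sqrt 3 < 1.73206.
Proof.
  assert (H : sqrt 3 * sqrt 3 = 3) by (apply sqrt_sqrt; lra).
  assert (0 <= sqrt 3) by apply sqrt_pos. split; [auto|split; nra].
Qed.
Lemma s2_facts : sqrt 2 * sqrt 2 = 2 /\ 1.41421 < sqrt 2 < 1.41422.
Proof.
  assert (H : sqrt 2 * sqrt 2 = 2) by (apply sqrt_sqrt; lra).
  assert (0 <= sqrt 2) by apply sqrt_pos. split; [auto|split; nra].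
Qed.

Definition lo := (sqrt 3 - 1) / 2.
Definition hi := sqrt 3 - 1.

Lemma F2_bnd_n n : forall v, F2 v -> lo - (3/4)^n <= v <= hi + (3/4)^n.
Proof.
  destruct s3_facts as [S3 [S3a S3b]]. unfold lo, hi.
  induction n; intros v Hv.
  - destruct Hv as [Hv _]. simpl. lra.
  - destruct (F2_dec v Hv) as [a [w [Ha [Hw Ev]]]].
    pose proof (F2_gt w Hw). destruct (IHn w Hw) as [L U].
    assert (He : 0 < (3/4)^n) by (apply pow_lt; lra).
    set (e := (3/4)^n) in *. simpl. fold e.
    destruct Hw as [[Hw0 Hw1] _].
    assert (Hva : v * (a + w) = 1) by (rewrite Ev; field; destruct Ha; subst; lra).
    assert (0 < v) by (rewrite Ev; apply Rdiv_lt_0_compat; destruct Ha; subst; lra).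
    split.
    + assert (v * (2 + w) >= 1) by (destruct Ha; subst; nra).
      destruct (Rle_or_lt ((sqrt 3 - 1)/2 - 3/4*e) v) as [|Hc]; [lra|exfalso].
      assert (((sqrt 3 - 1)/2 - 3/4*e - v) * (2 + w) > 0) by (apply Rmult_gt_0_compat; lra).
      assert ((sqrt 3 - 1)/2 * (sqrt 3 - 1 + e - w) >= 0) by (apply Rle_ge, Rmult_le_pos; lra).
      nra.
    + assert (v * (1 + w) <= 1) by (destruct Ha; subst; nra).
      destruct (Rle_or_lt v (sqrt 3 - 1 + 3/4*e)) as [|Hc]; [lra|exfalso].
      assert ((v - (sqrt 3 - 1 + 3/4*e)) * (1 + w) > 0) by (apply Rmult_gt_0_compat; lra).
      assert ((sqrt 3 - 1) * (w - ((sqrt 3 - 1)/2 - e)) >= 0) by (apply Rle_ge, Rmult_le_pos; lra).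
      nra.
Qed.

Lemma lim0 a c : 0 <= c < 1 -> (forall n, a <= c ^ n) -> a <= 0.
Proof.
  intros Hc H. destruct (Rle_or_lt a 0) as [|Ha]; auto. exfalso.
  destruct (pow_lt_1_zero c) with (y := a) as [N HN]; auto.
  rewrite Rabs_pos_eq; lra.
  specialize (HN N (le_n N)). specialize (H N).
  rewrite Rabs_pos_eq in HN; [lra|apply pow_le; lra].
Qed.

Lemma F2_bnd v : F2 v -> lo <= v <= hi.
Proof.
  intro H. split.
  - assert (lo - v <= 0); [|lra]. apply (lim0 _ (3/4)); [lra|].
    intro n. destruct (F2_bnd_n n v H). lra.
  - assert (v - hi <= 0); [|lra]. apply (lim0 _ (3/4)); [lra|].
    intro n. destruct (F2_bnd_n n v H). lra.
Qed.

Definition W (v : R) := (v - sqrt 2 + 1) / (v + sqrt 2 + 1).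

Lemma div_eq a b c d : b <> 0 -> d <> 0 -> a * d = c * b -> a / b = c / d.
Proof. intros Hb Hd H. field_simplify_eq; auto. lra. Qed.

Lemma W_h v : 0 <= v -> W (1 / (2 + v)) = (2 * sqrt 2 - 3) * W v.
Proof.
  destruct s2_facts as [S2 [S2a S2b]]. intro Hv. unfold W.
  replace (1 / (2 + v) - sqrt 2 + 1) with ((3 - 2 * sqrt 2 - (sqrt 2 - 1) * v)/(2+v)) by (field; lra).
  replace (1 / (2 + v) + sqrt 2 + 1) with ((3 + 2 * sqrt 2 + (sqrt 2 + 1) * v)/(2+v)) by (field; lra).
  replace ((3 - 2 * sqrt 2 - (sqrt 2 - 1) * v) / (2 + v) / ((3 + 2 * sqrt 2 + (sqrt 2 + 1) * v) / (2 + v)))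
    with ((3 - 2 * sqrt 2 - (sqrt 2 - 1) * v) / (3 + 2 * sqrt 2 + (sqrt 2 + 1) * v)) by (field; nra).
  rewrite Rmult_div_assoc.
  apply div_eq; try nra.
  set (r := sqrt 2) in *.
  replace ((2 * r - 3) * (v - r + 1) * (3 + 2 * r + (r + 1) * v))
    with ((3 - 2 * r - (r - 1) * v) * (v + r + 1) + (r*r - 2) * (2*v + 2 + (4 + 2*v)*(v - r + 1))) by ring.
  rewrite S2. ring.
Qed.

Lemma W0 v : 0 < v -> W v = 0 -> v = sqrt 2 - 1.
Proof.
  destruct s2_facts as [S2 [S2a S2b]]. unfold W. intros Hv H.
  assert (v - sqrt 2 + 1 = 0); [|lra].
  apply (f_equal (fun t => t * (v + sqrt 2 + 1))) in H. field_simplify in H; lra.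
Qed.

Lemma div_ge n d c : 0 < d -> c * d <= n -> c <= n / d.
Proof. intros Hd H. apply Rmult_le_reg_r with d; auto. field_simplify; lra. Qed.
Lemma div_le n d c : 0 < d -> n <= c * d -> n / d <= c.
Proof. intros Hd H. apply Rmult_le_reg_r with d; auto. field_simplify; lra. Qed.

Lemma F2_num v : F2 v -> 0.36602 <= v <= 0.73206.
Proof. intro H. destruct (F2_bnd v H). destruct s3_facts as [_ [? ?]]. unfold lo, hi in *. lra. Qed.

Lemma W_lb v : F2 v -> -0.0174 <= W v.
Proof.
  intro H. destruct (F2_num v H). destruct s2_facts as [_ [? ?]].
  unfold W. apply div_ge; lra.
Qed.

Lemma W_abs v : F2 v -> Rabs (W v) <= 1.
Proof.
  intro H. destruct (F2_num v H). destruct s2_facts as [_ [? ?]].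
  apply Rabs_le. unfold W; split; [apply div_ge|apply div_le]; lra.
Qed.

Lemma W_lb1 w : F2 w -> 0.054 <= W (1 / (1 + w)).
Proof.
  intro H. destruct (F2_num w H). destruct s2_facts as [_ [? ?]].
  assert (1/(1+w) >= 0.577347).
  { apply Rle_ge. apply div_ge; lra. }
  unfold W. apply div_ge; lra.
Qed.

Lemma dig v : F2 v -> (exists w, F2 w /\ v = 1 / (2 + w)) \/ 0.054 <= W v.
Proof.
  intro H. destruct (F2_dec v H) as [a [w [[-> | ->] [Hw ->]]]].
  - right. apply W_lb1; auto.
  - left. eauto.
Qed.

Lemma key v1 v2 v3 C1 C2 C3 : F2 v1 -> F2 v2 -> F2 v3 ->
  0.2418 <= C1 <= 0.2470 -> 0.2418 <= C2 <= 0.2470 -> 0.4769 <= C3 <= 0.4868 ->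
  C1 * W v1 + C2 * W v2 + C3 * W v3 = 0 ->
  exists w1 w2 w3, F2 w1 /\ F2 w2 /\ F2 w3 /\
    v1 = 1 / (2 + w1) /\ v2 = 1 / (2 + w2) /\ v3 = 1 / (2 + w3).
Proof.
  intros H1 H2 H3 HC1 HC2 HC3 E.
  pose proof (W_lb v1 H1). pose proof (W_lb v2 H2). pose proof (W_lb v3 H3).
  assert (P1 : 0 <= C1 * (W v1 + 0.0174)) by (apply Rmult_le_pos; lra).
  assert (P2 : 0 <= C2 * (W v2 + 0.0174)) by (apply Rmult_le_pos; lra).
  assert (P3 : 0 <= C3 * (W v3 + 0.0174)) by (apply Rmult_le_pos; lra).
  destruct (dig v1 H1) as [[w1 [F1 E1]] | L1];
  [| assert (0 <= (C1 - 0.2418) * W v1) by (apply Rmult_le_pos; lra); exfalso; nra].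
  destruct (dig v2 H2) as [[w2 [F2' E2]] | L2];
  [| assert (0 <= (C2 - 0.2418) * W v2) by (apply Rmult_le_pos; lra); exfalso; nra].
  destruct (dig v3 H3) as [[w3 [F3 E3]] | L3];
  [| assert (0 <= (C3 - 0.4769) * W v3) by (apply Rmult_le_pos; lra); exfalso; nra].
  exists w1, w2, w3. auto 10.
Qed.

Lemma descent n : forall v1 v2 v3 C1 C2 C3, F2 v1 -> F2 v2 -> F2 v3 ->
  0.2418 <= C1 <= 0.2470 -> 0.2418 <= C2 <= 0.2470 -> 0.4769 <= C3 <= 0.4868 ->
  C1 * W v1 + C2 * W v2 + C3 * W v3 = 0 ->
  Rabs (W v1) <= (1/5)^n /\ Rabs (W v2) <= (1/5)^n /\ Rabs (W v3) <= (1/5)^n.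
Proof.
  induction n; intros v1 v2 v3 C1 C2 C3 H1 H2 H3 HC1 HC2 HC3 E.
  - simpl. repeat split; apply W_abs; auto.
  - destruct (key v1 v2 v3 C1 C2 C3 H1 H2 H3 HC1 HC2 HC3 E)
      as [w1 [w2 [w3 [F1 [F2' [F3 [E1 [E2 E3]]]]]]]].
    destruct s2_facts as [_ [S2a S2b]].
    set (K := 2 * sqrt 2 - 3) in *.
    assert (HK : Rabs K <= 1/5) by (apply Rabs_le; unfold K; lra).
    assert (HK0 : K <> 0) by (unfold K; lra).
    pose proof (F2_num w1 F1). pose proof (F2_num w2 F2'). pose proof (F2_num w3 F3).
    rewrite E1, E2, E3, !W_h in E by lra.
    assert (E' : C1 * W w1 + C2 * W w2 + C3 * W w3 = 0).
    { apply Rmult_eq_reg_l with K; auto. fold K in E. lra. }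
    destruct (IHn w1 w2 w3 C1 C2 C3 F1 F2' F3 HC1 HC2 HC3 E') as [B1 [B2 B3]].
    assert (Hp : 0 <= (1/5)^n) by (apply pow_le; lra).
    simpl. rewrite E1, E2, E3, !W_h by lra. fold K. rewrite !Rabs_mult.
    pose proof (Rabs_pos K). pose proof (Rabs_pos (W w1)). pose proof (Rabs_pos (W w2)). pose proof (Rabs_pos (W w3)).
    repeat split; apply Rmult_le_compat; auto.
Qed.

Lemma C3_bnd s : F2 s -> 0.2418 <= (s + sqrt 2 + 1) / ((3 + s) * (2 + sqrt 2)) <= 0.2470.
Proof.
  intro H. destruct (F2_num s H). destruct s2_facts as [_ [? ?]].
  split; [apply div_ge|apply div_le]; nra.
Qed.
Lemma Cu_bnd s : F2 s -> 0.4769 <= (s + sqrt 2 + 1) / ((2 + s) * (1 + sqrt 2)) <= 0.4868.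
Proof.
  intro H. destruct (F2_num s H). destruct s2_facts as [_ [? ?]].
  split; [apply div_ge|apply div_le]; nra.
Qed.

Lemma Wzero v : (forall n, Rabs (W v) <= (1/5)^n) -> W v = 0.
Proof.
  intro H. assert (Rabs (W v) <= 0). { apply (lim0 _ (1/5)); [lra|auto]. }
  pose proof (Rabs_pos (W v)). destruct (Req_dec (W v) 0) as [|Hn]; auto.
  pose proof (Rabs_pos_lt _ Hn). lra.
Qed.

Lemma case332 s t u : F2 s -> F2 t -> F2 u ->
  1 / (3 + s) + 1 / (3 + t) + 1 / (2 + u) = 1 ->
  s = sqrt 2 - 1 /\ t = sqrt 2 - 1 /\ u = sqrt 2 - 1.
Proof.
  intros Hs Ht Hu E.
  destruct s2_facts as [S2 [S2a S2b]].
  pose proof (F2_num s Hs). pose proof (F2_num t Ht). pose proof (F2_num u Hu).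
  assert (I3 : forall v, 0 < v -> (v + sqrt 2 + 1) / ((3 + v) * (2 + sqrt 2)) * W v
                  = 1 / (2 + sqrt 2) - 1 / (3 + v)).
  { intros v Hv. unfold W. field. lra. }
  assert (I2 : forall v, 0 < v -> (v + sqrt 2 + 1) / ((2 + v) * (1 + sqrt 2)) * W v
                  = 1 / (1 + sqrt 2) - 1 / (2 + v)).
  { intros v Hv. unfold W. field. lra. }
  assert (Hsum : 2 / (2 + sqrt 2) + 1 / (1 + sqrt 2) = 1).
  { field_simplify_eq; [|lra]. nra. }
  assert (E' : (s + sqrt 2 + 1) / ((3 + s) * (2 + sqrt 2)) * W s
             + (t + sqrt 2 + 1) / ((3 + t) * (2 + sqrt 2)) * W t
             + (u + sqrt 2 + 1) / ((2 + u) * (1 + sqrt 2)) * W u = 0).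
  { rewrite I3, I3, I2 by lra. lra. }
  assert (D := fun n => descent n s t u _ _ _ Hs Ht Hu (C3_bnd s Hs) (C3_bnd t Ht) (Cu_bnd u Hu) E').
  repeat split; apply W0; try lra; apply Wzero; intro n; apply (D n).
Qed.

Lemma vb1 s : F2 s -> 0.5773 <= 1/(1+s) <= 0.7321.
Proof. intro H; destruct (F2_num s H); split; [apply div_ge|apply div_le]; lra. Qed.
Lemma vb2 s : F2 s -> 0.366 <= 1/(2+s) <= 0.4227.
Proof. intro H; destruct (F2_num s H); split; [apply div_ge|apply div_le]; lra. Qed.
Lemma vb3 s : F2 s -> 0.2679 <= 1/(3+s) <= 0.2971.
Proof. intro H; destruct (F2_num s H); split; [apply div_ge|apply div_le]; lra. Qed.

Lemma lb3 s : F2 s -> 2 - sqrt 3 <= 1/(3+s).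
Proof. intro H. destruct (F2_bnd s H) as [_ U]. destruct (F2_num s H). unfold hi in U.
  destruct s3_facts as [S3 [? ?]]. apply div_ge; [lra|].
  assert ((2 - sqrt 3) * (sqrt 3 - 1 - s) >= 0) by (apply Rle_ge, Rmult_le_pos; lra). nra. Qed.
Lemma lb2 s : F2 s -> (sqrt 3 - 1)/2 <= 1/(2+s).
Proof. intro H. destruct (F2_bnd s H) as [_ U]. destruct (F2_num s H). unfold hi in U.
  destruct s3_facts as [S3 [? ?]]. apply div_ge; [lra|].
  assert ((sqrt 3 - 1) * (sqrt 3 - 1 - s) >= 0) by (apply Rle_ge, Rmult_le_pos; lra). nra. Qed.

Lemma forward x y z :
  inB 2 1 x -> inB 2 1 y -> inB 2 1 z -> x <= y -> y <= z -> x + y + z = 1 ->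
    ((x = 2 - sqrt 3 /\ y = (sqrt 3 - 1) / 2 /\ z = (sqrt 3 - 1) / 2) \/
     (x = (2 - sqrt 2) / 2 /\ y = (2 - sqrt 2) / 2 /\ z = sqrt 2 - 1)).
Proof.
  intros Hx Hy Hz Lxy Lyz E.
  destruct (B_dec x Hx) as [a [s [Ha [Hs ->]]]].
  destruct (B_dec y Hy) as [b [t [Hb [Ht ->]]]].
  destruct (B_dec z Hz) as [c [u [Hc [Hu ->]]]].
  pose proof (vb1 s Hs); pose proof (vb2 s Hs); pose proof (vb3 s Hs).
  pose proof (vb1 t Ht); pose proof (vb2 t Ht); pose proof (vb3 t Ht).
  pose proof (vb1 u Hu); pose proof (vb2 u Hu); pose proof (vb3 u Hu).
  destruct Ha as [ -> | [ -> | -> ] ]; destruct Hb as [ -> | [ -> | -> ] ]; destruct Hc as [ -> | [ -> | -> ] ];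
    try (exfalso; lra).
  - (* 3 2 2 *)
    left. pose proof (lb3 s Hs). pose proof (lb2 t Ht). pose proof (lb2 u Hu).
    repeat split; lra.
  - (* 3 3 2 *)
    right. destruct (case332 s t u Hs Ht Hu E) as [-> [-> ->]].
    destruct s2_facts as [S2 [? ?]].
    repeat split; field_simplify_eq; try lra; nra.
Qed.

Open Scope Z_scope.


Lemma sq_div p a m : (p = 2 \/ p = 3)%Z -> (a * a = p * m)%Z -> exists c, (a = p * c)%Z.
Proof.
  intros Hp H. exists (a / p).
  assert (Hp0 : p > 0) by lia.
  pose proof (Z.div_mod a p ltac:(lia)). pose proof (Z.mod_pos_bound a p ltac:(lia)).
  remember (a / p) as c. remember (a mod p) as r.
  assert (r = 0); [|lia].
  rewrite H0 in H.
  assert (E : p * (p*c*c + 2*c*r) + r * r = p * m) by (rewrite <- H; ring).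
  remember (p*c*c + 2*c*r) as X.
  destruct Hp as [-> | ->]; assert (r = 0 \/ r = 1 \/ r = 2) by lia;
  destruct H2 as [-> | [-> | ->]]; lia.
Qed.

Lemma no_sq p : (p = 2 \/ p = 3)%Z -> forall n a b, (Z.abs b < Z.of_nat n)%Z -> b <> 0%Z -> (a * a <> p * (b * b))%Z.
Proof.
  intros Hp n. induction n; intros a b Hn Hb H; [lia|].
  destruct (sq_div p a (b*b) Hp H) as [c ->].
  assert (H2 : b * b = p * (c * c)).
  { assert (p * (p * (c*c)) = p * (b * b)) by (rewrite <- H; ring).
    destruct Hp; subst; lia. }
  destruct (sq_div p b (c*c) Hp H2) as [d ->].
  assert (Hd : d <> 0) by lia.
  apply (IHn c d); auto.
  - destruct Hp; subst; lia.
  - assert (p * (p * (d*d)) = p * (c * c)) by (rewrite <- H2; ring).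
    destruct Hp; subst; lia.
Qed.

Close Scope Z_scope.

Lemma irr_lin k m n d : (k = 2 \/ k = 3)%Z -> n <> 0%Z -> d <> 0%Z ->
  irrational ((IZR m + IZR n * sqrt (IZR k)) / IZR d).
Proof.
  intros Hk Hn Hd p q Hq E.
  assert (Hs : sqrt (IZR k) * sqrt (IZR k) = IZR k)
    by (apply sqrt_sqrt; destruct Hk; subst; simpl; lra).
  assert (Rn : IZR n <> 0) by (apply not_0_IZR; auto).
  assert (Rd : IZR d <> 0) by (apply not_0_IZR; auto).
  assert (Rq : IZR q <> 0) by (apply not_0_IZR; auto).
  assert (Es : sqrt (IZR k) = IZR (d*p - m*q) / IZR (n*q)).
  { rewrite minus_IZR, !mult_IZR.
    assert (E2 : IZR m + IZR n * sqrt (IZR k) = IZR p / IZR q * IZR d) by (rewrite <- E; field; auto).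
    assert (sqrt (IZR k) = (IZR p / IZR q * IZR d - IZR m) / IZR n) by (rewrite <- E2; field; auto).
    rewrite H. set (P := IZR p); set (Q := IZR q); set (D := IZR d); set (M := IZR m); set (N := IZR n). field. auto. }
  assert (Hnq : (n*q)%Z <> 0%Z) by lia.
  apply (no_sq k Hk (S (Z.to_nat (Z.abs (n*q)))) (d*p - m*q) (n*q)); [lia|auto|].
  apply eq_IZR. rewrite !mult_IZR.
  assert (HB : IZR (n*q) <> 0) by (apply not_0_IZR; auto).
  set (A := IZR (d*p - m*q)) in *. set (B := IZR (n*q)) in *.
  assert (A = sqrt (IZR k) * B) by (rewrite Es; field; auto).
  rewrite H. transitivity ((sqrt (IZR k) * sqrt (IZR k)) * (B * B)); [ring | rewrite Hs; unfold B; rewrite mult_IZR; ring].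
Qed.

Lemma gstep v iv z : v * iv = 1 -> IZR z <= iv < IZR z + 1 ->
  gauss v = iv - IZR z /\ cf_a 1 v = z.
Proof.
  intros H B. pose proof (inv_of _ _ H) as Hi.
  rewrite cf_1. unfold gauss. rewrite Hi, (floor_spec iv z B). auto.
Qed.

Lemma F2_pair p q : 0 < p < 1 -> 0 < q < 1 -> irrational p -> irrational q ->
  gauss p = q -> gauss q = p -> (cf_a 1 p <= 2)%Z -> (cf_a 1 q <= 2)%Z -> F2 p /\ F2 q.
Proof.
  intros Hp Hq Ip Iq Gp Gq Cp Cq.
  assert (forall k, (cf_a (S k) p <= 2)%Z /\ (cf_a (S k) q <= 2)%Z).
  { induction k; auto. rewrite <- !cf_shift, Gp, Gq. tauto. }
  split; repeat split; try tauto; intros k Hk; destruct k; try lia; apply H.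
Qed.

Lemma inB_of v : 0 < v < 1 -> irrational v -> (cf_a 1 v <= 3)%Z -> F2 (gauss v) -> inB 2 1 v.
Proof.
  intros Hv Iv C [_ [_ G]]. split; [auto|split; [auto|]]. intros k Hk. split; intro Hk2.
  - assert (k = 1%nat) by lia. subst. auto.
  - destruct k as [|[|j]]; try lia. rewrite <- cf_shift. apply G. lia.
Qed.

Lemma backward_vals :
  inB 2 1 (2 - sqrt 3) /\ inB 2 1 ((sqrt 3 - 1)/2) /\
  inB 2 1 ((2 - sqrt 2)/2) /\ inB 2 1 (sqrt 2 - 1).
Proof.
  destruct s3_facts as [S3 [S3a S3b]]. destruct s2_facts as [S2 [S2a S2b]].
  assert (IA : irrational (2 - sqrt 3)).
  { replace (2 - sqrt 3) with ((IZR 2 + IZR (-1) * sqrt (IZR 3)) / IZR 1) by (simpl; field).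
    apply irr_lin; lia. }
  assert (IP : irrational (sqrt 3 - 1)).
  { replace (sqrt 3 - 1) with ((IZR (-1) + IZR 1 * sqrt (IZR 3)) / IZR 1) by (simpl; field).
    apply irr_lin; lia. }
  assert (IQ : irrational ((sqrt 3 - 1)/2)).
  { replace ((sqrt 3 - 1)/2) with ((IZR (-1) + IZR 1 * sqrt (IZR 3)) / IZR 2) by (simpl; field).
    apply irr_lin; lia. }
  assert (ID : irrational ((2 - sqrt 2)/2)).
  { replace ((2 - sqrt 2)/2) with ((IZR 2 + IZR (-1) * sqrt (IZR 2)) / IZR 2) by (simpl; field).
    apply irr_lin; lia. }
  assert (IE : irrational (sqrt 2 - 1)).
  { replace (sqrt 2 - 1) with ((IZR (-1) + IZR 1 * sqrt (IZR 2)) / IZR 1) by (simpl; field).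
    apply irr_lin; lia. }
  destruct (gstep (2 - sqrt 3) (2 + sqrt 3) 3) as [GA CA]; [nra|simpl; lra|].
  destruct (gstep (sqrt 3 - 1) ((sqrt 3 + 1)/2) 1) as [GP CP]; [nra|simpl; lra|].
  destruct (gstep ((sqrt 3 - 1)/2) (sqrt 3 + 1) 2) as [GQ CQ]; [nra|simpl; lra|].
  destruct (gstep ((2 - sqrt 2)/2) (2 + sqrt 2) 3) as [GD CD]; [nra|simpl; lra|].
  destruct (gstep (sqrt 2 - 1) (sqrt 2 + 1) 2) as [GE CE]; [nra|simpl; lra|].
  assert (GP' : gauss (sqrt 3 - 1) = (sqrt 3 - 1)/2) by (rewrite GP; simpl; field).
  assert (GQ' : gauss ((sqrt 3 - 1)/2) = sqrt 3 - 1) by (rewrite GQ; simpl; field).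
  assert (GE' : gauss (sqrt 2 - 1) = sqrt 2 - 1) by (rewrite GE; simpl; field).
  destruct (F2_pair (sqrt 3 - 1) ((sqrt 3 - 1)/2)) as [FP FQ]; auto;
    [lra | lra | rewrite CP; lia | rewrite CQ; lia |].
  destruct (F2_pair (sqrt 2 - 1) (sqrt 2 - 1)) as [FE _]; auto;
    [lra | lra | rewrite CE; lia | rewrite CE; lia |].
  split; [|split; [|split]].
  - apply inB_of; auto; [lra | rewrite CA; lia | replace (gauss (2 - sqrt 3)) with (sqrt 3 - 1) by (rewrite GA; simpl; field); auto].
  - apply inB_of; auto; [lra | rewrite CQ; lia | replace (gauss ((sqrt 3 - 1)/2)) with (sqrt 3 - 1) by (rewrite GQ; simpl; field); auto].
  - apply inB_of; auto; [lra | rewrite CD; lia | replace (gauss ((2 - sqrt 2)/2)) with (sqrt 2 - 1) by (rewrite GD; simpl; field); auto].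
  - apply inB_of; auto; [lra | rewrite CE; lia | replace (gauss (sqrt 2 - 1)) with (sqrt 2 - 1) by (rewrite GE; simpl; field); auto].
Qed.

Theorem mainTheorem6 :
  forall x y z : R,
    (inB 2 1 x /\ inB 2 1 y /\ inB 2 1 z /\ x <= y /\ y <= z /\ x + y + z = 1)
    <->
    ((x = 2 - sqrt 3 /\ y = (sqrt 3 - 1) / 2 /\ z = (sqrt 3 - 1) / 2) \/
     (x = (2 - sqrt 2) / 2 /\ y = (2 - sqrt 2) / 2 /\ z = sqrt 2 - 1)).
Proof.
  intros x y z. split.
  - intros [Hx [Hy [Hz [L1 [L2 E]]]]]. apply forward; auto.
  - destruct backward_vals as [A [Q [D Ev]]].
    destruct s3_facts as [S3 [S3a S3b]]. destruct s2_facts as [S2 [S2a S2b]].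
    intros [[-> [-> ->]] | [-> [-> ->]]]; (split; [|split; [|split; [|split; [|split]]]]); auto; lra.
Qed.
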